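(* Let $\mathrm{Bool}_t$ assign to each finite set $X$ a subset $\mathrm{Bool}_t(X)\subseteq\mathrm{Bool}(X)$, stable under bijections ($f\circ\sigma^{-1}\in\mathrm{Bool}_t(X')$ for $f\in\mathrm{Bool}_t(X)$, $\sigma:X\to X'$ bijective), with $1\in\mathrm{Bool}_t(\emptyset)$, closed under $\star_1$ and under restrictions. Let $\mathcal{E}$ assign to each $f\in\mathrm{Bool}_t(X)$ a set $\mathcal{E}(f)$ of equivalence relations on $X$, compatible with bijections ($\mathcal{E}(f\circ\sigma^{-1})$ is the image of $\mathcal{E}(f)$ under transport by $\sigma$), such that $f/{\sim}\in\mathrm{Bool}_t(X/{\sim})$ for all $\sim\in\mathcal{E}(f)$. Assume: ($\star_1$) $\mathcal{E}(1)$ contains the equivalence on $\emptyset$, and $\mathcal{E}(f\star_1g)=\{\sim_X\sqcup\sim_Y\mid\sim_X\in\mathcal{E}(f),\ \sim_Y\in\mathcal{E}(g)\}$ for disjoint $X,Y$, $f\in\mathrm{Bool}_t(X)$, $g\in\mathrm{Bool}_t(Y)$; ($\delta$) for $f\in\mathrm{Bool}_t(X)$ and $\sim\subseteq\sim'$: ($\sim\in\mathcal{E}(f)$ and $\overline{\sim'}\in\mathcal{E}(f/{\sim})$) iff ($\sim'\in\mathcal{E}(f)$ and $\sim\in\mathcal{E}(f\mid\sim')$); ($\Delta$) for disjoint $X,Y$, $f\in\mathrm{Bool}_t(X\sqcup Y)$ and equivalences $\sim_X,\sim_Y$ on $X,Y$: $\sim_X\sqcup\sim_Y\in\mathcal{E}(f)$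 iff $\sim_X\in\mathcal{E}(f_{\mid X})$ and $\sim_Y\in\mathcal{E}(f_{\mid Y})$; ($\epsilon$) for $f\in\mathrm{Bool}_t(X)$: $=_X$ and $\sim_f^i$ belong to $\mathcal{E}(f)$; for $\sim\in\mathcal{E}(f)$, $f\mid\sim$ is modular iff $\sim$ is $=_X$; and $f/{\sim}$ is modular iff $\sim=\sim_f^i$. Then $\mathcal{E}(f)=\mathcal{E}^S(f)=\mathcal{E}^W(f)$ for every finite set $X$ and every $f\in\mathrm{Bool}_t(X)$.
   Context: A boolean function on a finite set $X$ is a map $f:\mathcal{P}(X)\to\mathbb{Z}$ with $f(\emptyset)=0$; $\mathrm{Bool}(X)$ is their set; $f_{\mid Y}$ is the restriction to $\mathcal{P}(Y)$. For disjoint $X,Y$, $(f\star_1g)(A)=f(A\cap X)+g(A\cap Y)$ (associative, commutative, unit $1\in\mathrm{Bool}(\emptyset)$). For nonempty $X$, $f$ is indecomposable if $f=f'\star_1f''$ with $f'\in\mathrm{Bool}(X\setminus Y)$, $f''\in\mathrm{Bool}(Y)$ forces $Y\in\{\emptyset,X\}$. Each $f$ determines a unique equivalence $\sim_f^i$ with $f=\prod^{\star_1}_{Y\in X/\sim_f^i}f_{\mid Y}$ and each $f_{\mid Y}$ indecomposable; $\mathrm{ic}(f)=|X/\sim_f^i|$. $f$ is modular if $f(A)=\sum_{x\in A}f(\{x\})$ for all $A$. For an equivalence $\sim$ on $X$: $\mathrm{cl}(\sim)=|X/{\sim}|$, $\varpi_\sim$ the canonical surjection, $f/{\sim}(A)=f(\varpi_\sim^{-1}(A))$,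 $(f\mid\sim)(A)=\sum_{Y\in X/\sim}f(A\cap Y)$. If $\sim\subseteq\sim'$, $\overline{\sim'}$ is the equivalence on $X/{\sim}$ with $\varpi_\sim(x)\,\overline{\sim'}\,\varpi_\sim(y)\iff x\sim'y$. $=_X$ is the equality relation. $\mathcal{E}^W(f)=\{\sim:\mathrm{ic}(f\mid\sim)=\mathrm{cl}(\sim)\}$ and $\mathcal{E}^S(f)=\{\sim\in\mathcal{E}^W(f):\mathrm{ic}(f/{\sim})=\mathrm{ic}(f)\}$. *)

(* Defs.v *)
(* Finite sets are modelled as finTypes; equivalence
   relations on X as partitions of [set: X] (their sets of classes). *)
From HB Require Import structures.
From mathcomp Require Import all_boot all_order all_algebra.
From Stdlib Require Import ClassicalEpsilon.
Set Implicit Arguments. Unset Strict Implicit. Unset Printing Implicit Defensive.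
Import GRing.Theory Num.Theory.
Local Open Scope ring_scope.

(* Bool(X): maps P(X) -> Z (the condition f(emptyset)=0 is is_bool). *)
Definition bfun (X : finType) := {ffun {set X} -> int}.
Definition is_bool (X : finType) (f : bfun X) : Prop := f set0 = 0.

Definition transp (X X' : finType) (s : X -> X') (f : bfun X) : bfun X' :=
  [ffun A : {set X'} => f (s @^-1: A)].
Definition tr_part (X X' : finType) (s : X -> X') (P : {set {set X}})
  : {set {set X'}} := [set s @: B | B : {set X} in P].

Definition unit1 : bfun void := [ffun _ => 0].

Definition star (X Y : finType) (f : bfun X) (g : bfun Y) : bfun (X + Y)%type :=
  [ffun A : {set (X + Y)%type} => f (@inl X Y @^-1: A) + g (@inr X Y @^-1: A)].
Definition part_sum (X Y : finType) (PX : {set {set X}}) (PY : {set {set Y}})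
  : {set {set (X + Y)%type}} :=
  [set (@inl X Y) @: B | B : {set X} in PX] :|: [set (@inr X Y) @: B | B : {set Y} in PY].
Definition restrl (X Y : finType) (f : bfun (X + Y)%type) : bfun X :=
  [ffun A : {set X} => f (@inl X Y @: A)].
Definition restrr (X Y : finType) (f : bfun (X + Y)%type) : bfun Y :=
  [ffun A : {set Y} => f (@inr X Y @: A)].

Definition subT (X : finType) (Y : {set X}) : finType := {x : X | x \in Y}.
Definition restr (X : finType) (Y : {set X}) (f : bfun X) : bfun (subT Y) :=
  [ffun A : {set subT Y} => f (val @: A)].

(* X / ~  (the set of classes), f / ~, f | ~, overline ~' *)
Definition quot (X : finType) (P : {set {set X}}) : finType :=
  {B : {set X} | B \in P}.
Definition fquot (X : finType) (f : bfun X) (P : {set {set X}})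
  : bfun (quot P) := [ffun S : {set quot P} => f (\bigcup_(b in S) val b)].
Definition fmid (X : finType) (f : bfun X) (P : {set {set X}}) : bfun X :=
  [ffun A : {set X} => \sum_(B in P) f (A :&: B)].
Definition qpart (X : finType) (P P' : {set {set X}}) : {set {set quot P}} :=
  [set [set b : quot P | val b \subset B'] | B' : {set X} in P'].

Definition refines (X : finType) (P P' : {set {set X}}) : Prop :=
  forall B, B \in P -> exists2 B', B' \in P' & B \subset B'.

Definition eqpart (X : finType) : {set {set X}} := [set [set x] | x : X].

Definition modular (X : finType) (f : bfun X) : Prop :=
  forall A, f A = \sum_(x in A) f [set x].

Definition indecomposable (Y : finType) (g : bfun Y) : Prop :=
  (0 < #|Y|)%N /\
  forall Z : {set Y},
    (exists (g1 : bfun (subT (~: Z))) (g2 : bfun (subT Z)),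
        is_bool g1 /\ is_bool g2 /\
        forall A, g A = g1 (val @^-1: A) + g2 (val @^-1: A)) ->
    Z = set0 \/ Z = [set: Y].

Definition is_icpart (X : finType) (f : bfun X) (P : {set {set X}}) : Prop :=
  partition P [set: X] /\
  (forall A, f A = \sum_(B in P) restr B f [set y : subT B | val y \in A]) /\
  (forall B, B \in P -> indecomposable (restr B f)).

Definition icpart (X : finType) (f : bfun X) : {set {set X}} :=
  epsilon (inhabits set0) (is_icpart f).
Definition ic (X : finType) (f : bfun X) : nat := #|icpart f|.

Definition EW (X : finType) (f : bfun X) (P : {set {set X}}) : Prop :=
  partition P [set: X] /\ ic (fmid f P) = #|P|.
Definition ES (X : finType) (f : bfun X) (P : {set {set X}}) : Prop :=
  EW f P /\ ic (fquot f P) = ic f.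

(* Main.v *)
Require Import Defs.
From HB Require Import structures.
From mathcomp Require Import all_boot all_order all_algebra.
From Stdlib Require Import ClassicalEpsilon.
Set Implicit Arguments. Unset Strict Implicit. Unset Printing Implicit Defensive.
Import GRing.Theory Num.Theory.
Local Open Scope ring_scope.


Section Val.
Variables (X : finType) (C : {set X}).
Implicit Types (A B Z : {set subT C}) (W : {set X}).

Lemma val_imset_pre W : val @: (val @^-1: W : {set subT C}) = W :&: C.
Proof.
apply/setP=> x; rewrite inE; apply/imsetP/andP.
  by case=> y; rewrite inE => Hy ->; split => //; exact: (valP y).
case=> Hx HC; exists (exist _ x HC) => //; by rewrite inE.
Qed.

Lemma val_pre_imset A : (val @^-1: (val @: A) : {set subT C}) = A.
Proof. by apply/setP=> y; rewrite inE mem_imset //; exact: val_inj. Qed.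

Lemma val_imsetI A B : val @: (A :&: B) = val @: A :&: val @: B.
Proof. by apply: imsetI => x y _ _; exact: val_inj. Qed.

Lemma val_imsetD A B : val @: (A :\: B) = val @: A :\: val @: B.
Proof.
apply/setP=> x; apply/imsetP/setDP.
  case=> y /setDP[yA nyB] ->; split; first exact: imset_f.
  by rewrite (mem_imset _ _ val_inj).
case=> /imsetP[y yA ->] nB; exists y => //; apply/setDP; split=> //.
by apply: contra nB => yB; exact: imset_f.
Qed.

Lemma val_imset_sub A : val @: A \subset C.
Proof. by apply/subsetP=> _ /imsetP[y _ ->]; exact: (valP y). Qed.

Lemma val_imsetT : val @: [set: subT C] = C.
Proof.
apply/setP=> x; apply/imsetP/idP; first by case=> y _ ->; exact: (valP y).
by move=> Hx; exists (exist _ x Hx).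
Qed.

Lemma val_imset_inj A B : val @: A = val @: B -> A = B.
Proof. apply: imset_inj; exact: val_inj. Qed.

Lemma val_imset_eq0 A : (val @: A == set0) = (A == set0).
Proof. exact: imset_eq0. Qed.

Lemma restrE (f : bfun X) A : restr C f A = f (val @: A).
Proof. by rewrite /restr ffunE. Qed.

Lemma restr_pre (f : bfun X) W : restr C f (val @^-1: W) = f (W :&: C).
Proof. by rewrite restrE val_imset_pre. Qed.
End Val.

Lemma partT_P (X : finType) (P : {set {set X}}) :
  partition P [set: X] <->
  [/\ set0 \notin P, (forall x, exists2 B, B \in P & x \in B) &
      (forall B1 B2 x, B1 \in P -> B2 \in P -> x \in B1 -> x \in B2 -> B1 = B2)].
Proof.
split.
  move=> Hp; have Htr := partition_trivIset Hp.
  case/and3P: Hp => /eqP Hc _ H0; split => //.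
    move=> x; have : x \in cover P by rewrite Hc inE.
    by case/bigcupP => B HB xB; exists B.
  move=> B1 B2 x H1 H2 x1 x2.
  by rewrite -(def_pblock Htr H1 x1) (def_pblock Htr H2 x2).
case=> H0 Hc Hu; apply/and3P; split => //.
  apply/eqP/setP=> x; rewrite inE; case: (Hc x) => B HB xB.
  by apply/bigcupP; exists B.
apply/trivIsetP=> B1 B2 H1 H2 Hne; apply/pred0P=> x /=.
apply/negP=> /andP[x1 x2]; by rewrite (Hu _ _ _ H1 H2 x1 x2) eqxx in Hne.
Qed.


Definition decomp (X : finType) (f : bfun X) (P : {set {set X}}) : Prop :=
  forall A, f A = \sum_(B in P) f (A :&: B).
Definition indecB (X : finType) (f : bfun X) (D : {set X}) : Prop :=
  D != set0 /\ forall Z : {set X}, Z \subset D ->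
    (forall A : {set X}, A \subset D -> f A = f (A :&: Z) + f (A :\: Z)) -> Z = set0 \/ Z = D.

Lemma restr_bool (X : finType) (C : {set X}) (f : bfun X) :
  is_bool f -> is_bool (restr C f).
Proof. by rewrite /is_bool restrE imset0. Qed.

Lemma decomp_dec (X : finType) (f : bfun X) P B0 :
  is_bool f -> partition P [set: X] -> decomp f P -> B0 \in P ->
  forall A, f A = f (A :&: B0) + f (A :\: B0).
Proof.
move=> f0 /partT_P[_ _ Hu] Hd HB0 A.
rewrite Hd (Hd (A :\: B0)) (bigD1 B0) //= (bigD1 B0 HB0) /=.
have -> : (A :\: B0) :&: B0 = set0.
  by apply/setP=> x; rewrite !inE; case: (x \in B0); rewrite ?andbF.
rewrite f0 add0r; congr (_ + _); apply: eq_bigr => B /andP[HB nB].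
congr (f _); apply/setP=> x; rewrite !inE.
case xB: (x \in B); rewrite ?andbF ?andbT //.
case xB0: (x \in B0) => //=.
by rewrite (Hu _ _ _ HB HB0 xB xB0) eqxx in nB.
Qed.

Lemma F2 (X : finType) (f : bfun X) P C :
  is_bool f -> partition P [set: X] -> decomp f P -> indecB f C ->
  exists2 B, B \in P & C \subset B.
Proof.
move=> f0 Hp Hd [/set0Pn[x xC] Hi].
have [_ Hc _] := (partT_P P).1 Hp.
case: (Hc x) => B0 HB0 xB0; exists B0 => //.
have HZ : C :&: B0 \subset C by exact: subsetIl.
case: (Hi _ HZ).
- move=> A HA; rewrite (decomp_dec f0 Hp Hd HB0 A); congr (f _ + f _).
    by rewrite setIA (setIidPl HA).
  apply/setP=> y; rewrite !inE; case yA: (y \in A); rewrite ?andbF //=.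
  by rewrite (subsetP HA _ yA).
- by move/setP/(_ x); rewrite !inE xC xB0.
- by move=> HCB; rewrite -HCB subsetIr.
Qed.

Lemma A3 (Y : finType) (g : bfun Y) :
  is_bool g -> indecomposable g <-> indecB g [set: Y].
Proof.
move=> g0; split.
  case=> Hc Hi; split; first by rewrite -card_gt0 cardsT.
  move=> Z _ Hs; apply: Hi.
  exists (restr (~: Z) g), (restr Z g); split; first exact: restr_bool.
  split; first exact: restr_bool.
  move=> A; rewrite !restr_pre (Hs A (subsetT _)) addrC setDE; by [].
case=> Hc Hi; split; first by rewrite -cardsT card_gt0.
move=> Z [g1 [g2 [b1 [b2 Heq]]]]; apply: Hi => // A _.
have E1 : (val @^-1: (A :&: Z) : {set subT (~: Z)}) = set0.
  apply/setP=> y; rewrite !inE; have := valP y; rewrite inE.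
  by case: (val y \in Z); rewrite ?andbF.
have E2 : (val @^-1: (A :&: Z) : {set subT Z}) = val @^-1: A.
  by apply/setP=> y; rewrite !inE (valP y) andbT.
have E3 : (val @^-1: (A :\: Z) : {set subT (~: Z)}) = val @^-1: A.
  apply/setP=> y; rewrite !inE; have := valP y; rewrite inE => ->; by [].
have E4 : (val @^-1: (A :\: Z) : {set subT Z}) = set0.
  by apply/setP=> y; rewrite !inE (valP y).
rewrite (Heq A) (Heq (A :&: Z)) (Heq (A :\: Z)) E1 E2 E3 E4 b1 b2.
by rewrite add0r addr0 addrC.
Qed.

Lemma A5 (X : finType) (C : {set X}) (f : bfun X) (D : {set subT C}) :
  indecB (restr C f) D <-> indecB f (val @: D).
Proof.
split.
  case=> HD Hi; split; first by rewrite val_imset_eq0.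
  move=> Z HZ Hs.
  have HZC : Z \subset C := subset_trans HZ (val_imset_sub D).
  have HZ' : (val @^-1: Z : {set subT C}) \subset D.
    by rewrite -(val_pre_imset D); apply: preimsetS.
  have HZZ : val @: (val @^-1: Z : {set subT C}) = Z by rewrite val_imset_pre (setIidPl HZC).
  case: (Hi _ HZ').
  - move=> A HA; rewrite !restrE val_imsetD val_imsetI HZZ; apply: Hs.
    exact: imsetS.
  - by move=> H0; left; rewrite -HZZ H0 imset0.
  - by move=> HD'; right; rewrite -HZZ HD'.
case=> HD Hi; split; first by rewrite -val_imset_eq0.
move=> Z HZ Hs.
case: (Hi (val @: Z)).
- exact: imsetS.
- move=> A HA.
  have HAC : A \subset C := subset_trans HA (val_imset_sub D).
  have HAA : val @: (val @^-1: A : {set subT C}) = A by rewrite val_imset_pre (setIidPl HAC).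
  have HA' : (val @^-1: A : {set subT C}) \subset D.
    by rewrite -(val_pre_imset D); apply: preimsetS.
  have := Hs _ HA'; rewrite !restrE val_imsetD val_imsetI HAA; by [].
- by move=> H0; left; apply: val_imset_inj; rewrite H0 imset0.
- by move=> H0; right; apply: val_imset_inj.
Qed.

Lemma indec_restr (X : finType) (C : {set X}) (f : bfun X) :
  is_bool f -> indecomposable (restr C f) <-> indecB f C.
Proof.
move=> f0; rewrite A3; last exact: restr_bool.
by rewrite A5 val_imsetT.
Qed.

Lemma is_icpart_iff (X : finType) (f : bfun X) P :
  is_bool f -> is_icpart f P <-> [/\ partition P [set: X], decomp f P &
                                  forall B, B \in P -> indecB f B].
Proof.
move=> f0.
have Hr : forall (A B : {set X}), restr B f [set y : subT B | val y \in A] = f (A :&: B).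
  move=> A B; rewrite -restr_pre; congr (restr B f _); by apply/setP=> y; rewrite !inE.
split.
  case=> Hp [Hd Hi]; split => //.
    by move=> A; rewrite Hd; apply: eq_bigr => B _; rewrite Hr.
  by move=> B HB; apply/(indec_restr B f0); apply: Hi.
case=> Hp Hd Hi; split => //; split.
  by move=> A; rewrite Hd; apply: eq_bigr => B _; rewrite Hr.
by move=> B HB; apply/(indec_restr B f0); apply: Hi.
Qed.

Lemma indecB_ext (X : finType) (f g : bfun X) (D : {set X}) :
  (forall A : {set X}, A \subset D -> f A = g A) -> indecB f D -> indecB g D.
Proof.
move=> Hfg [HD Hi]; split => // Z HZ Hs; apply: Hi => // A HA.
have h1 : A :&: Z \subset D by apply: subset_trans HA; exact: subsetIl.
have h2 : A :\: Z \subset D by apply: subset_trans HA; exact: subsetDl.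
rewrite (Hfg A HA) (Hfg _ h1) (Hfg _ h2); exact: Hs.
Qed.

Lemma refine_eq (X : finType) (R P : {set {set X}}) :
  partition R [set: X] -> partition P [set: X] ->
  (forall C, C \in R -> exists2 B, B \in P & C \subset B) ->
  (forall B, B \in P -> exists2 C, C \in R & B \subset C) -> R = P.
Proof.
move=> HR HP H1 H2.
have [R0 _ Ru] := (partT_P R).1 HR; have [P0 _ Pu] := (partT_P P).1 HP.
have sub : forall (R P : {set {set X}}), set0 \notin R ->
   (forall B1 B2 x, B1 \in R -> B2 \in R -> x \in B1 -> x \in B2 -> B1 = B2) ->
   (forall C, C \in R -> exists2 B, B \in P & C \subset B) ->
   (forall B, B \in P -> exists2 C, C \in R & B \subset C) -> R \subset P.
  move=> R' P' R0' Ru' H1' H2'; apply/subsetP=> C HC.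
  case: (H1' C HC) => B HB CB; case: (H2' B HB) => C' HC' BC'.
  have : C != set0 by apply: contraNneq R0' => <-.
  case/set0Pn=> x xC.
  have CC : C = C' by apply: (Ru' _ _ x HC HC' xC); apply: (subsetP BC'); exact: (subsetP CB).
  suff -> : C = B by [].
  by apply/eqP; rewrite eqEsubset CB CC BC'.
by apply/eqP; rewrite eqEsubset (sub R P) // (sub P R).
Qed.

Lemma refine_card (X : finType) (R P : {set {set X}}) :
  partition R [set: X] -> partition P [set: X] ->
  (forall C, C \in R -> exists2 B, B \in P & C \subset B) ->
  #|R| = #|P| -> R = P.
Proof.
move=> HR HP H1 Hc.
have [R0 Rc Ru] := (partT_P R).1 HR; have [P0 Pc Pu] := (partT_P P).1 HP.
have trP := partition_trivIset HP.
pose phi (C : {set X}) := if [pick x in C] is Some x then pblock P x else set0.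
have Hphi : forall C B, C \in R -> B \in P -> C \subset B -> phi C = B.
  move=> C B HC HB CB; rewrite /phi; case: pickP => [x xC|H].
    exact: def_pblock trP HB (subsetP CB _ xC).
  have : C != set0 by apply: contraNneq R0 => <-.
  by case/set0Pn=> x xC; move: (H x); rewrite /= xC.
have Hpre : forall B, B \in P -> exists2 C, C \in R & phi C = B /\ C :&: B != set0.
  move=> B HB; have : B != set0 by apply: contraNneq P0 => <-.
  case/set0Pn=> x xB; case: (Rc x) => C HC xC; case: (H1 C HC) => B' HB' CB'.
  have BB : B' = B by apply: (Pu _ _ x HB' HB) => //; exact: (subsetP CB').
  exists C => //; split; first by apply: Hphi; rewrite // -BB.
  by apply/set0Pn; exists x; rewrite inE xC.
have PS : P \subset phi @: R.
  by apply/subsetP=> B HB; case: (Hpre B HB) => C HC [<- _]; exact: imset_f.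
have SP : phi @: R \subset P.
  apply/subsetP=> _ /imsetP[C HC ->]; case: (H1 C HC) => B HB CB.
  by rewrite (Hphi C B).
have inj : {in R &, injective phi}.
  apply/imset_injP; rewrite eqn_leq leq_imset_card /= Hc.
  exact: subset_leq_card PS.
suff PR : P \subset R.
  by apply/eqP; rewrite eq_sym eqEcard PR Hc leqnn.
apply/subsetP=> B HB; case: (Hpre B HB) => C HC [pC /set0Pn[x /setIP[xC xB]]].
case: (H1 C HC) => B' HB' CB'.
have BB : B' = B by apply: (Pu _ _ x HB' HB) => //; exact: (subsetP CB').
subst B'.
suff -> : B = C by [].
apply/eqP; rewrite eqEsubset CB' andbT; apply/subsetP=> y yB.
case: (Rc y) => C' HC' yC'; case: (H1 C' HC') => B'' HB'' CB''.
have BB : B'' = B by apply: (Pu _ _ y HB'' HB) => //; exact: (subsetP CB'').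
subst B''.
have : phi C' = phi C by rewrite pC (Hphi C' B).
by move/(inj _ _ HC' HC) => <-.
Qed.


Lemma F1 (X : finType) (f : bfun X) : is_bool f ->
  exists P, [/\ partition P [set: X], decomp f P & forall B, B \in P -> indecB f B].
Proof.
move=> f0.
pose good (P : {set {set X}}) := partition P [set: X] &&
   [forall A : {set X}, f A == \sum_(B in P) f (A :&: B)].
have goodP : forall P, good P -> partition P [set: X] /\ decomp f P.
  move=> P /andP[Hp /forallP Hd]; split => // A; exact/eqP/Hd.
have [P0 HP0] : exists P0, good P0.
  case: (boolP ([set: X] == set0)) => [/eqP HT | HT].
    exists set0; apply/andP; split; first by rewrite HT partition_set0.
    apply/forallP=> A; rewrite big_set0.
    have : A \subset [set: X] := subsetT A.
    by rewrite HT subset0 => /eqP ->; rewrite f0.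
  exists [set [set: X]]; apply/andP; split.
    apply/partT_P; split.
    - by rewrite inE eq_sym.
    - by move=> x; exists [set: X]; rewrite ?inE.
    - by move=> B1 B2 x /set1P -> /set1P ->.
  by apply/forallP=> A; rewrite big_set1 setIT.
case: (@arg_maxnP _ P0 good (fun P => #|P|) HP0) => P HP Hmax.
have [Hp Hd] := goodP P HP.
have [Hp0 Hc Hu] := (partT_P P).1 Hp.
exists P; split => // B HB; split; first exact: (partition_neq0 Hp HB).
move=> Z HZ Hs.
case: (Z =P set0) => [->|Z0]; first by left.
case: (Z =P B) => [->|ZB]; first by right.
exfalso.
have BZ0 : B :\: Z != set0.
  apply/negP => /eqP H; apply: ZB; apply/eqP; rewrite eqEsubset HZ /=.
  by rewrite -setD_eq0 H.
have Z0' : Z != set0 by apply/eqP.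
have disj : forall C x, C \in P -> C != B -> x \in C -> x \in B -> False.
  move=> C x HC nCB xC xB; by rewrite (Hu _ _ _ HC HB xC xB) eqxx in nCB.
have ZnP : Z \notin P :\ B.
  apply/negP=> /setD1P[nZB ZP]; case/set0Pn: Z0' => x xZ.
  exact: (disj Z x ZP nZB xZ (subsetP HZ _ xZ)).
have BZnP : B :\: Z \notin P :\ B.
  apply/negP=> /setD1P[nZB ZP]; case/set0Pn: BZ0 => x xZ.
  apply: (disj _ x ZP nZB xZ); by move: xZ; rewrite inE => /andP[].
have ZBZ : Z \notin (B :\: Z) |: (P :\ B).
  rewrite in_setU1 negb_or ZnP andbT; apply/eqP=> H.
  case/set0Pn: Z0' => x xZ; have := xZ; rewrite {1}H inE xZ; by [].
pose P' := Z |: ((B :\: Z) |: (P :\ B)).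
have goodP' : good P'.
  apply/andP; split.
    apply/partT_P; split.
    - apply/negP; rewrite /P'; case/setU1P => [H|]; first by rewrite -H eqxx in Z0'.
      case/setU1P => [H|/setD1P[_ H]]; first by rewrite -H eqxx in BZ0.
      by rewrite H in Hp0.
    - move=> x; case: (Hc x) => C HC xC; case: (C =P B) => [CB|nCB].
        subst C; case: (boolP (x \in Z)) => xZ.
          by exists Z; rewrite ?setU11.
        by exists (B :\: Z); rewrite /P' ?inE ?eqxx ?orbT // xZ xC.
      exists C => //; rewrite /P' !inE HC andbT; apply/orP; right; apply/orP; right.
      exact/eqP.
    - have cls : forall D, D \in P' ->
         [\/ D = Z, D = B :\: Z | D != B /\ D \in P].
        move=> D; rewrite /P'; case/setU1P => [->|]; first by constructor 1.
        case/setU1P => [->|/setD1P H]; first by constructor 2.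
        by constructor 3.
      move=> B1 B2 x /cls H1 /cls H2 x1 x2.
      have sZ : forall y, y \in Z -> y \in B by move=> y; exact: (subsetP HZ).
      have sBZ : forall y, y \in B :\: Z -> y \in B by move=> y; rewrite inE => /andP[].
      case: H1 => [E1|E1|[n1 m1]]; case: H2 => [E2|E2|[n2 m2]]; subst.
      + by [].
      + by move: x2; rewrite inE x1.
      + by case: (disj _ x m2 n2 x2 (sZ _ x1)).
      + by move: x1; rewrite inE x2.
      + by [].
      + by case: (disj _ x m2 n2 x2 (sBZ _ x1)).
      + by case: (disj _ x m1 n1 x1 (sZ _ x2)).
      + by case: (disj _ x m1 n1 x1 (sBZ _ x2)).
      + exact: (Hu _ _ x m1 m2 x1 x2).
  apply/forallP=> A; apply/eqP.
  rewrite /P' big_setU1 //= big_setU1 //= (Hd A) (big_setD1 B HB) /=.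
  rewrite addrA; congr (_ + _).
  have AB : A :&: B \subset B := subsetIr A B.
  rewrite (Hs _ AB) -setIA (setIidPr HZ); congr (_ + f _).
  by apply/setP=> y; rewrite !inE; case: (y \in A); case: (y \in B); case: (y \in Z).
have := Hmax P' goodP'.
rewrite /P' cardsU1 ZBZ cardsU1 BZnP (cardsD1 B P) HB.
by move=> H; have := leq_ltn_trans H (ltnSn _); rewrite ltnn.
Qed.

Lemma icpart_spec (X : finType) (f : bfun X) : is_bool f ->
  [/\ partition (icpart f) [set: X], decomp f (icpart f) &
      forall B, B \in icpart f -> indecB f B].
Proof.
move=> f0; apply/(is_icpart_iff _ f0); rewrite /icpart; apply: epsilon_spec.
case: (F1 f0) => P HP; exists P; exact/(is_icpart_iff _ f0).
Qed.

Lemma fmid_bool (X : finType) (f : bfun X) P : is_bool f -> is_bool (fmid f P).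
Proof. by move=> f0; rewrite /is_bool ffunE big1 // => B _; rewrite set0I f0. Qed.

Lemma fmid_sub (X : finType) (f : bfun X) P (B A : {set X}) :
  is_bool f -> partition P [set: X] -> B \in P -> A \subset B -> fmid f P A = f A.
Proof.
move=> f0 Hp HB AB; have [_ _ Hu] := (partT_P P).1 Hp.
rewrite ffunE (bigD1 B) //= big1 ?addr0 ?(setIidPl AB) // => C /andP[HC nCB].
suff -> : A :&: C = set0 by rewrite f0.
apply/setP=> x; rewrite !inE; apply/negP=> /andP[xA xC].
by rewrite (Hu _ _ _ HC HB xC (subsetP AB _ xA)) eqxx in nCB.
Qed.

Lemma fmid_decomp (X : finType) (f : bfun X) P :
  is_bool f -> partition P [set: X] -> decomp (fmid f P) P.
Proof.
move=> f0 Hp A; rewrite ffunE; apply: eq_bigr => B HB.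
by rewrite (fmid_sub f0 Hp HB) // subsetIr.
Qed.

Definition IB (X : finType) (f : bfun X) (P : {set {set X}}) : Prop :=
  partition P [set: X] /\ forall B, B \in P -> indecB f B.

Lemma EW_IB (X : finType) (f : bfun X) P : is_bool f -> (EW f P <-> IB f P).
Proof.
move=> f0; have g0 := fmid_bool P f0.
have [HR HdR HiR] := icpart_spec g0.
split.
  case=> Hp Hc.
  have Hd := fmid_decomp f0 Hp.
  have RP : icpart (fmid f P) = P.
    apply: refine_card => //; first by move=> C HC; apply: (F2 g0 Hp Hd); exact: HiR.
  split => // B HB; apply: (indecB_ext (g := f) _ (HiR B _)); last by rewrite RP.
  by move=> A AB; rewrite (fmid_sub f0 Hp HB).
case=> Hp Hi; split => //.
have Hd := fmid_decomp f0 Hp.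
have RP : icpart (fmid f P) = P.
  apply: refine_eq => //.
    by move=> C HC; apply: (F2 g0 Hp Hd); exact: HiR.
  move=> B HB; apply: (F2 g0 HR HdR).
  apply: (indecB_ext (f := f) _ (Hi B HB)).
  by move=> A AB; rewrite (fmid_sub f0 Hp HB).
by rewrite /ic RP.
Qed.


Lemma modular_triv (T : finType) (g : bfun T) :
  is_bool g -> (forall x y : T, x = y) -> modular g.
Proof.
move=> g0 Hxy A; case: (set_0Vmem A) => [->|[x xA]].
  by rewrite big_set0; exact: g0.
have -> : A = [set x] by apply/setP=> y; rewrite inE (Hxy y x) xA eqxx.
by rewrite big_set1.
Qed.

Lemma fquot_bool (X : finType) (f : bfun X) P : is_bool f -> is_bool (fquot f P).
Proof. by move=> f0; rewrite /is_bool ffunE big_set0. Qed.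

Lemma setT_part (Y : finType) : [set: Y] != set0 -> partition [set [set: Y]] [set: Y].
Proof.
move=> HT; apply/partT_P; split.
- by rewrite inE eq_sym.
- by move=> x; exists [set: Y]; rewrite ?inE.
- by move=> B1 B2 x /set1P -> /set1P ->.
Qed.

Section L1.
Local Unset Implicit Arguments.
Variables (Bt : forall X : finType, bfun X -> Prop)
  (E : forall X : finType, bfun X -> {set {set X}} -> Prop).
Local Set Implicit Arguments.
Hypothesis HBbool : forall (X : finType) (f : bfun X), Bt X f -> is_bool f.
Hypothesis HEpart : forall (X : finType) (f : bfun X) (P : {set {set X}}),
      Bt X f -> E X f P -> partition P [set: X].
Hypothesis Heps1 : forall (X : finType) (f : bfun X),
      Bt X f -> E X f (eqpart X) /\ E X f (icpart f).
Hypothesis Heps2 : forall (X : finType) (f : bfun X) (P : {set {set X}}),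
      Bt X f -> E X f P ->
      (modular (fmid f P) <-> P = eqpart X) /\
      (modular (fquot f P) <-> P = icpart f).

Lemma L1 (Y : finType) (h : bfun Y) :
  Bt Y h -> (E Y h [set [set: Y]] <-> indecB h [set: Y]).
Proof.
move=> Hb; have h0 := HBbool Hb.
have [HR HdR HiR] := icpart_spec h0.
split.
  move=> HE; have Hp := HEpart Hb HE.
  have [_ Hq] := Heps2 Hb HE.
  have : modular (fquot h [set [set: Y]]).
    apply: modular_triv; first exact: fquot_bool.
    move=> x y; apply: val_inj; have := valP x; have := valP y.
    by rewrite !inE => /eqP -> /eqP ->.
  move/Hq => Hic; apply: HiR; by rewrite -Hic inE.
move=> Hi; have [B HB TB] := F2 h0 HR HdR Hi.
have BT : B = [set: Y] by apply/eqP; rewrite eqEsubset subsetT TB.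
have [R0 Rc Ru] := (partT_P _).1 HR.
suff <- : icpart h = [set [set: Y]] by case: (Heps1 Hb).
apply/setP=> C; rewrite inE; apply/idP/eqP.
  move=> HC; have : C != set0 by apply: contraNneq R0 => <-.
  case/set0Pn=> x xC; rewrite -BT; apply: (Ru _ _ x HC HB xC).
  by rewrite BT inE.
by move=> ->; rewrite -BT.
Qed.
End L1.

Section Split.
Variables (X : finType) (B : {set X}).
Definition sp (x : X) : (subT (~: B) + subT B)%type :=
  match Bool.bool_dec (x \in B) true with
  | left h => inr (exist _ x h)
  | right h => inl (exist (fun x => x \in ~: B) x (ltac:(rewrite /= in_setC; apply/negP; exact h)))
  end.
Definition tp (u : (subT (~: B) + subT B)%type) : X :=
  match u with inl y => val y | inr y => val y end.

Lemma sp_can : cancel sp tp.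
Proof. by move=> x; rewrite /sp; case: Bool.bool_dec. Qed.

Lemma tp_can : cancel tp sp.
Proof.
case=> y; rewrite /sp /=; case: Bool.bool_dec => h.
- by have := valP y; rewrite in_setC h.
- by congr inl; apply: val_inj.
- by congr inr; apply: val_inj.
- by case: h; exact: (valP y).
Qed.

Lemma sp_bij : bijective sp.
Proof. exists tp; [exact: sp_can | exact: tp_can]. Qed.

Lemma sp_pre (S : {set (subT (~: B) + subT B)%type}) : sp @^-1: S = tp @: S.
Proof.
apply/setP=> x; rewrite inE; apply/idP/imsetP.
  by move=> H; exists (sp x) => //; rewrite sp_can.
by case=> u uS ->; rewrite tp_can.
Qed.

Lemma sp_imset (C : {set X}) : sp @: C = tp @^-1: C.
Proof.
apply/setP=> u; rewrite inE; apply/imsetP/idP.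
  by case=> x xC ->; rewrite sp_can.
by move=> H; exists (tp u) => //; rewrite tp_can.
Qed.

Lemma inl_inj : injective (@inl (subT (~: B)) (subT B)).
Proof. by move=> a b []. Qed.
Lemma inr_inj : injective (@inr (subT (~: B)) (subT B)).
Proof. by move=> a b []. Qed.

Lemma restrl_sp (f : bfun X) : restrl (transp sp f) = restr (~: B) f.
Proof.
apply/ffunP=> A; by rewrite !ffunE sp_pre -imset_comp; congr (f _); apply: eq_imset.
Qed.

Lemma restrr_sp (f : bfun X) : restrr (transp sp f) = restr B f.
Proof.
apply/ffunP=> A; by rewrite !ffunE sp_pre -imset_comp; congr (f _); apply: eq_imset.
Qed.

Lemma sp_imset_out (C : {set X}) : (forall x, x \in C -> x \notin B) ->
  sp @: C = inl @: (val @^-1: C : {set subT (~: B)}).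
Proof.
move=> HC; rewrite sp_imset; apply/setP; case=> y; rewrite inE /=.
  by rewrite (mem_imset _ _ inl_inj) inE.
apply/idP/imsetP.
  by move=> H; have := HC _ H; rewrite (valP y).
by case=> z _.
Qed.

Lemma sp_imset_B : sp @: B = inr @: [set: subT B].
Proof.
rewrite sp_imset; apply/setP; case=> y; rewrite inE /=.
  apply/idP/imsetP; last by case=> z _.
  by have := valP y; rewrite in_setC => /negbTE ->.
by rewrite (valP y) (mem_imset _ _ inr_inj) inE.
Qed.

Definition PX (P : {set {set X}}) : {set {set subT (~: B)}} :=
  [set (val @^-1: C : {set subT (~: B)}) | C : {set X} in P :\ B].

Variable P : {set {set X}}.
Hypotheses (HP : partition P [set: X]) (HB : B \in P).

Lemma out_of_B (C : {set X}) (x : X) : C \in P :\ B -> x \in C -> x \notin B.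
Proof.
have [_ _ Hu] := (partT_P P).1 HP.
case/setD1P=> nCB HC xC; apply/negP=> xB.
by rewrite (Hu _ _ _ HC HB xC xB) eqxx in nCB.
Qed.

Lemma val_PX (C : {set X}) : C \in P :\ B -> val @: (val @^-1: C : {set subT (~: B)}) = C.
Proof.
move=> HC; rewrite val_imset_pre; apply/setIidPl/subsetP=> x xC.
by rewrite in_setC (out_of_B HC xC).
Qed.

Lemma tr_part_sp : tr_part sp P = part_sum (PX P) [set [set: subT B]].
Proof.
rewrite /tr_part /part_sum /PX -{1}(setD1K HB) imsetU1 imset_set1 sp_imset_B setUC.
rewrite -imset_comp; congr (_ :|: _); apply: eq_in_imset => C HC /=.
apply: sp_imset_out => x; exact: out_of_B.
Qed.

Lemma PX_part : partition (PX P) [set: subT (~: B)].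
Proof.
have [P0 Pc Pu] := (partT_P P).1 HP.
apply/partT_P; split.
- apply/imsetP=> [[C HC H0]].
  have : C != set0 by apply: contraNneq P0 => <-; case/setD1P: HC.
  case/set0Pn=> x xC.
  have xB : x \in ~: B by rewrite in_setC (out_of_B HC xC).
  by move/setP: H0 => /(_ (exist _ x xB)); rewrite !inE xC.
- move=> y; case: (Pc (val y)) => C HC yC.
  exists (val @^-1: C); last by rewrite inE.
  apply: imset_f; apply/setD1P; split => //.
  apply/eqP=> CB; subst C; by have := valP y; rewrite in_setC yC.
- move=> D1 D2 y /imsetP[C1 H1 ->] /imsetP[C2 H2 ->]; rewrite !inE => y1 y2.
  case/setD1P: H1 => _ H1; case/setD1P: H2 => _ H2.
  by rewrite (Pu _ _ _ H1 H2 y1 y2).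
Qed.

Lemma B_part : partition [set [set: subT B]] [set: subT B].
Proof.
apply: setT_part; have [P0 _ _] := (partT_P P).1 HP.
have : B != set0 by apply: contraNneq P0 => <-.
case/set0Pn=> x xB; apply/set0Pn; by exists (exist _ x xB).
Qed.

Lemma PX_card : #|PX P| = #|P :\ B|.
Proof.
apply: card_in_imset => C1 C2 H1 H2 /= E12.
by rewrite -(val_PX H1) -(val_PX H2) E12.
Qed.

Lemma PX_val (D : {set subT (~: B)}) : D \in PX P -> val @: D \in P.
Proof.
by case/imsetP=> C HC ->; rewrite (val_PX HC); case/setD1P: HC.
Qed.
End Split.


Lemma tr_part_K (X : finType) (B : {set X}) (P : {set {set X}}) :
  tr_part (tp (B:=B)) (tr_part (sp B) P) = P.
Proof.
rewrite /tr_part -imset_comp -[RHS]imset_id; apply: eq_imset => C /=.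
rewrite -imset_comp -[RHS]imset_id; apply: eq_imset => x /=; exact: sp_can.
Qed.

Lemma fquotE (X : finType) (f : bfun X) (P : {set {set X}}) (S : {set quot P}) :
  fquot f P S = f (\bigcup_(b in S) val b).
Proof. by rewrite ffunE. Qed.

Section Ax.
Local Unset Implicit Arguments.
Variables (Bt : forall X : finType, bfun X -> Prop)
  (E : forall X : finType, bfun X -> {set {set X}} -> Prop).
Hypothesis HBbool : forall (X : finType) (f : bfun X), Bt X f -> is_bool f.
Hypothesis HBbij : forall (X X' : finType) (s : X -> X') (f : bfun X),
      bijective s -> Bt X f -> Bt X' (transp s f).
Hypothesis HBres : forall (X : finType) (Y : {set X}) (f : bfun X),
      Bt X f -> Bt (subT Y) (restr Y f).
Hypothesis HEpart : forall (X : finType) (f : bfun X) (P : {set {set X}}),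
      Bt X f -> E X f P -> partition P [set: X].
Hypothesis HEbij : forall (X X' : finType) (s : X -> X') (f : bfun X),
      bijective s -> Bt X f ->
      forall P' : {set {set X'}},
        E X' (transp s f) P' <-> exists2 P, E X f P & P' = tr_part s P.
Hypothesis HEquot : forall (X : finType) (f : bfun X) (P : {set {set X}}),
      Bt X f -> E X f P -> Bt (quot P) (fquot f P).
Hypothesis Hdelta : forall (X : finType) (f : bfun X) (P P' : {set {set X}}),
      Bt X f -> partition P [set: X] -> partition P' [set: X] ->
      refines P P' ->
      (E X f P /\ E (quot P) (fquot f P) (qpart P P')) <->
      (E X f P' /\ E X (fmid f P') P).
Hypothesis HDelta : forall (X Y : finType) (f : bfun (X + Y)%type)
      (PX : {set {set X}}) (PY : {set {set Y}}),
      Bt (X + Y)%type f -> partition PX [set: X] -> partition PY [set: Y] ->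
      (E (X + Y)%type f (part_sum PX PY) <->
       E X (restrl f) PX /\ E Y (restrr f) PY).
Hypothesis Heps1 : forall (X : finType) (f : bfun X),
      Bt X f -> E X f (eqpart X) /\ E X f (icpart f).
Hypothesis Heps2 : forall (X : finType) (f : bfun X) (P : {set {set X}}),
      Bt X f -> E X f P ->
      (modular (fmid f P) <-> P = eqpart X) /\
      (modular (fquot f P) <-> P = icpart f).

Lemma E_IB (X : finType) (f : bfun X) P : Bt X f -> E X f P -> IB f P.
Proof.
move=> Hb HE; have Hp := HEpart _ _ _ Hb HE; split => // B HB.
have Hb' := HBbij _ _ (sp B) f (sp_bij B) Hb.
have HE' : E _ (transp (sp B) f) (tr_part (sp B) P).
  by apply/(HEbij _ _ (sp B) f (sp_bij B) Hb); exists P.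
rewrite (tr_part_sp Hp HB) in HE'.
case: ((HDelta _ _ _ _ _ Hb' (PX_part Hp HB) (B_part Hp HB)).1 HE') => _.
rewrite restrr_sp => HEB.
have := (@L1 Bt E HBbool HEpart Heps1 Heps2 _ _ (HBres _ B f Hb)).1 HEB.
by move/A5; rewrite val_imsetT.
Qed.

Lemma IB_E_n n : forall (X : finType) (f : bfun X) P, Bt X f -> IB f P -> #|P| = n -> E X f P.
Proof.
elim: n => [|n IH] X f P Hb [Hp Hi] Hc.
  have P0 : P = set0 by apply: cards0_eq.
  subst P; move: Hp => /and3P[/eqP Hcov _ _]; rewrite /cover big_set0 in Hcov.
  have -> : (set0 : {set {set X}}) = eqpart X.
    apply/setP=> C; rewrite inE; apply/esym/imsetP=> [[x _ _]].
    by move: (in_setT x); rewrite -Hcov inE.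
  by case: (Heps1 _ _ Hb).
have : P != set0 by rewrite -card_gt0 Hc.
case/set0Pn=> B HB.
have Hb' := HBbij _ _ (sp B) f (sp_bij B) Hb.
suff HE' : E _ (transp (sp B) f) (tr_part (sp B) P).
  case: ((HEbij _ _ (sp B) f (sp_bij B) Hb _).1 HE') => P0 HP0 EP.
  suff -> : P = P0 by [].
  by rewrite -(tr_part_K B P) EP tr_part_K.
rewrite (tr_part_sp Hp HB).
apply/(HDelta _ _ _ _ _ Hb' (PX_part Hp HB) (B_part Hp HB)); split.
  rewrite restrl_sp; apply: IH; first exact: HBres.
    split; first exact: PX_part.
    move=> D HD; apply/A5; apply: Hi; exact: PX_val HD.
  by rewrite PX_card //; move: Hc; rewrite (cardsD1 B P) HB add1n => -[].
rewrite restrr_sp; apply/(@L1 Bt E HBbool HEpart Heps1 Heps2 _ _ (HBres _ B f Hb)).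
by apply/A5; rewrite val_imsetT; apply: Hi.
Qed.

Lemma E_iff_IB (X : finType) (f : bfun X) P : Bt X f -> (E X f P <-> IB f P).
Proof.
move=> Hb; split; first exact: E_IB.
move=> HI; exact: (@IB_E_n #|P| X f P Hb HI erefl).
Qed.
Lemma E_ic (X : finType) (f : bfun X) P : Bt X f -> E X f P -> ic (fquot f P) = ic f.
Proof.
move=> Hb HE.
have Hp := HEpart _ _ _ Hb HE.
have [P0 Pc Pu] := (partT_P P).1 Hp.
have Hbq : Bt _ (fquot f P) := HEquot _ _ _ Hb HE.
move Rd : (icpart (fquot f P)) => R.
have HER : E _ (fquot f P) R by rewrite -Rd; exact: (Heps1 _ _ Hbq).2.
have HR := HEpart _ _ _ Hbq HER.
have [R0 Rc Ru] := (partT_P R).1 HR.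
pose U (K : {set quot P}) : {set X} := \bigcup_(b in K) val b.
have Une : forall b : quot P, val b != set0.
  move=> b; apply: contraNneq P0 => <-; exact: (valP b).
have Uin : forall (K : {set quot P}) (x : X), reflect (exists2 b, b \in K & x \in val b) (x \in U K).
  move=> K x; exact: bigcupP.
have uniqb : forall (b1 b2 : quot P) x, x \in val b1 -> x \in val b2 -> b1 = b2.
  move=> b1 b2 x h1 h2; apply: val_inj; exact: (Pu _ _ x (valP b1) (valP b2) h1 h2).
have Uinj : {in R &, injective U}.
  move=> K1 K2 H1 H2 HU.
  have : K1 != set0 by apply: contraNneq R0 => <-.
  case/set0Pn=> b bK1; case/set0Pn: (Une b) => x xb.
  have : x \in U K2 by rewrite -HU; apply/Uin; exists b.
  case/Uin=> b' b'K2 xb'; rewrite -(uniqb _ _ _ xb xb') in b'K2.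
  exact: (Ru _ _ b H1 H2 bK1 b'K2).
pose L := [set U K | K in R].
have HL : partition L [set: X].
  apply/partT_P; split.
  - apply/imsetP=> [[K HK H0]].
    have : K != set0 by apply: contraNneq R0 => <-.
    case/set0Pn=> b bK; case/set0Pn: (Une b) => x xb.
    have : x \in U K by apply/Uin; exists b.
    by rewrite -H0 inE.
  - move=> x; case: (Pc x) => B HB xB.
    case: (Rc (exist _ B HB : quot P)) => K HK bK.
    exists (U K); first exact: imset_f.
    by apply/Uin; exists (exist _ B HB : quot P).
  - move=> C1 C2 x /imsetP[K1 H1 ->] /imsetP[K2 H2 ->] /Uin[b1 b1K x1] /Uin[b2 b2K x2].
    rewrite -(uniqb _ _ _ x1 x2) in b2K; by rewrite (Ru _ _ b1 H1 H2 b1K b2K).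
have Href : refines P L.
  move=> B HB; case: (Rc (exist _ B HB : quot P)) => K HK bK.
  exists (U K); first exact: imset_f.
  apply/subsetP=> x xB; apply/Uin; by exists (exist _ B HB : quot P).
have Hq : qpart P L = R.
  rewrite /qpart /L -imset_comp -[RHS]imset_id; apply: eq_in_imset => K HK /=.
  apply/setP=> b; rewrite inE; apply/idP/idP.
    move=> sb; case/set0Pn: (Une b) => x xb.
    case/Uin: (subsetP sb x xb) => b' b'K xb'; by rewrite (uniqb _ _ _ xb xb').
  move=> bK; apply/subsetP=> x xb; apply/Uin; by exists b.
have HEq : E _ (fquot f P) (qpart P L) by rewrite Hq.
have [HEL _] := (Hdelta _ _ _ _ Hb Hp HL Href).1 (conj HE HEq).
have modR : modular (fquot (fquot f P) R) by apply/((Heps2 _ _ _ Hbq HER).2).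
have modL : modular (fquot f L).
  rewrite /modular => S; rewrite fquotE.
  rewrite (eq_bigr (fun c => f (val c))); last by move=> c _; rewrite fquotE big_set1.
  pose T : {set quot R} := [set k | U (val k) \in val @: S].
  have e1 : \bigcup_(b in \bigcup_(k in T) val k) val b = \bigcup_(c in S) val c.
    apply/setP=> x; apply/bigcupP/bigcupP.
    - case=> b /bigcupP[k kT bk] xb; move: kT; rewrite inE => /imsetP[c cS Hc].
      exists c => //; rewrite -Hc; apply/Uin; by exists b.
    - case=> c cS xc; have := valP c; case/imsetP=> K HK Hc.
      have kT : (exist _ K HK : quot R) \in T by rewrite inE /= -Hc imset_f.
      move: xc; rewrite Hc => /Uin[b bK xb]; exists b => //.
      by apply/bigcupP; exists (exist _ K HK : quot R).
  have := modR T; rewrite !fquotE e1 => ->.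
  rewrite (eq_bigr (fun k => f (U (val k)))); last by move=> k _; rewrite !fquotE big_set1.
  have injT : {in T &, injective (fun k : quot R => U (val k))}.
    move=> k1 k2 _ _ /= HU; apply: val_inj; exact: Uinj (valP k1) (valP k2) HU.
  have eS : [set U (val k) | k in T] = val @: S.
    apply/setP=> C; apply/imsetP/idP.
    - by case=> k; rewrite inE => kT ->.
    - move=> HC; case/imsetP: (HC) => c cS Hc; have := valP c; case/imsetP=> K HK HcK.
      exists (exist _ K HK : quot R); last by rewrite Hc HcK.
      by rewrite inE /= -HcK imset_f.
  transitivity (\sum_(C in [set U (val k) | k in T]) f C).
    by rewrite (big_imset (fun C => f C) injT).
  by rewrite eS (big_imset (fun C => f C) (in2W val_inj)).
have LR : L = icpart f by apply/((Heps2 _ _ _ Hb HEL).2).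
by rewrite /ic -LR Rd /L card_in_imset.
Qed.

Lemma main_thm : forall (X : finType) (f : bfun X), Bt X f ->
    forall P : {set {set X}}, (E X f P <-> ES f P) /\ (ES f P <-> EW f P).
Proof.
move=> X f Hb P.
have f0 := HBbool X f Hb.
have EIB : E X f P <-> IB f P := E_iff_IB X f P Hb.
have WIB : EW f P <-> IB f P := @EW_IB X f P f0.
have Eic : E X f P -> ic (fquot f P) = ic f := E_ic X f P Hb.
split; split.
- move=> HE; split; [apply/WIB/EIB; exact: HE | exact: Eic].
- by case=> HW _; apply/EIB/WIB.
- by case.
- move=> HW; have HE : E X f P by apply/EIB/WIB.
  split => //; exact: Eic.
Qed.
End Ax.

Local Close Scope ring_scope.

Theorem proposition3p19
  (Bt : forall X : finType, bfun X -> Prop)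
  (E : forall X : finType, bfun X -> {set {set X}} -> Prop)
  (* Bool_t(X) is a subset of Bool(X) *)
  (HBbool : forall (X : finType) (f : bfun X), Bt X f -> is_bool f)
  (HBbij : forall (X X' : finType) (s : X -> X') (f : bfun X),
      bijective s -> Bt X f -> Bt X' (transp s f))
  (HB1 : Bt void unit1)
  (HBstar : forall (X Y : finType) (f : bfun X) (g : bfun Y),
      Bt X f -> Bt Y g -> Bt (X + Y)%type (star f g))
  (HBres : forall (X : finType) (Y : {set X}) (f : bfun X),
      Bt X f -> Bt (subT Y) (restr Y f))
  (* E(f) is a set of equivalence relations on X *)
  (HEpart : forall (X : finType) (f : bfun X) (P : {set {set X}}),
      Bt X f -> E X f P -> partition P [set: X])
  (HEbij : forall (X X' : finType) (s : X -> X') (f : bfun X),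
      bijective s -> Bt X f ->
      forall P' : {set {set X'}},
        E X' (transp s f) P' <-> exists2 P, E X f P & P' = tr_part s P)
  (HEquot : forall (X : finType) (f : bfun X) (P : {set {set X}}),
      Bt X f -> E X f P -> Bt (quot P) (fquot f P))
  (* (star_1) *)
  (Hstar1 : E void unit1 set0)
  (Hstar2 : forall (X Y : finType) (f : bfun X) (g : bfun Y),
      Bt X f -> Bt Y g ->
      forall P : {set {set (X + Y)%type}},
        E (X + Y)%type (star f g) P <->
        exists PX PY, [/\ E X f PX, E Y g PY & P = part_sum PX PY])
  (* (delta) *)
  (Hdelta : forall (X : finType) (f : bfun X) (P P' : {set {set X}}),
      Bt X f -> partition P [set: X] -> partition P' [set: X] ->
      refines P P' ->
      (E X f P /\ E (quot P) (fquot f P) (qpart P P')) <->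
      (E X f P' /\ E X (fmid f P') P))
  (* (Delta) *)
  (HDelta : forall (X Y : finType) (f : bfun (X + Y)%type)
      (PX : {set {set X}}) (PY : {set {set Y}}),
      Bt (X + Y)%type f -> partition PX [set: X] -> partition PY [set: Y] ->
      (E (X + Y)%type f (part_sum PX PY) <->
       E X (restrl f) PX /\ E Y (restrr f) PY))
  (* (epsilon) *)
  (Heps1 : forall (X : finType) (f : bfun X),
      Bt X f -> E X f (eqpart X) /\ E X f (icpart f))
  (Heps2 : forall (X : finType) (f : bfun X) (P : {set {set X}}),
      Bt X f -> E X f P ->
      (modular (fmid f P) <-> P = eqpart X) /\
      (modular (fquot f P) <-> P = icpart f)) :
  forall (X : finType) (f : bfun X), Bt X f ->
    forall P : {set {set X}}, (E X f P <-> ES f P) /\ (ES f P <-> EW f P).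
Proof.
move=> X f Hb P.
eapply main_thm; eassumption.
Qed.
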